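(* Let $\sigma$ be a signature including $\{\triangleright, \wedge\}$, let $\mathcal{A}$ be a $\sigma$-algebra and let $\theta$ be a representation of $\mathcal{A}$ by partial functions. If $\theta$ is join complete, then $\theta$ is meet complete.
   Context: Signatures $\sigma$ are sets of operation symbols drawn from: $\triangleright$ (antidomain restriction), $;$ (composition), $\wedge$ (intersection), $\mathrm{upd}$ (update), $\sqcup$ (preferential union), $\mathsf{D}$ (domain), $\mathsf{A}$ (antidomain), interpreted on partial functions as: $f \triangleright g = \{(x,y) \in g : x \notin \mathrm{dom}(f)\}$; $f;g$ = relational composition ($f$ first); $f\wedge g = f\cap g$; $\mathrm{upd}(f,g)(x)$ is $f(x)$ if $f(x)$ defined and $g(x)$ undefined, $g(x)$ if both defined, undefined otherwise; $(f\sqcup g)(x)$ is $f(x)$ if defined, else $g(x)$; $\mathsf{D}(f)$ = identity on $\mathrm{dom}(f)$; $\mathsf{A}(f)$ = identity on the complement of $\mathrm{dom}(f)$ in the base. A representation by partial functions is an isomorphism onto a $\sigma$-algebra of partial functions with these operations. Define $0 := a\triangleright a$, $a\lhd b := (a\triangleright b)\triangleright b$, $a \le b :\iff a\lhd b = a$; for representable algebras this is a partial order and $a\le b \iff \theta(a)\subseteq\theta(b)$ for any representation $\theta$. $\theta$ is join complete if for every $S\subseteq\mathcal{A}$ with $\bigvee S$ existing, $\theta(\bigvee S)=\bigcup\theta[S]$; meet complete if for every nonempty $S$ with $\bigwedge S$ existing (in the poset $(\mathcal{A},\le)$), $\theta(\bigwedge S)=\bigcap\theta[S]$. *)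

(* Defs.v *)
(* Partial functions on a base set X are represented by their
   graphs: relations X -> X -> Prop that are functional. *)

Inductive op : Type :=
| OpRestr  (* antidomain restriction  |> *)
| OpComp
| OpMeet
| OpUpd
| OpPref
| OpDom
| OpAdom.

Definition signature := op -> Prop.

(* An algebra carrying an interpretation of every symbol; only the symbols in
   the signature sigma are constrained (by the representation), so this is a
   sigma-algebra (the other fields are irrelevant). *)
Record alg : Type := Alg {
  carrier :> Type;
  a_restr : carrier -> carrier -> carrier;
  a_comp  : carrier -> carrier -> carrier;
  a_meet  : carrier -> carrier -> carrier;
  a_upd   : carrier -> carrier -> carrier;
  a_pref  : carrier -> carrier -> carrier;
  a_dom   : carrier -> carrier;
  a_adom  : carrier -> carrier
}.

Definition prel (X : Type) := X -> X -> Prop.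

Definition functional {X : Type} (f : prel X) : Prop :=
  forall x y z, f x y -> f x z -> y = z.

Definition defined {X : Type} (f : prel X) (x : X) : Prop := exists z, f x z.

Definition releq {X : Type} (f g : prel X) : Prop := forall x y, f x y <-> g x y.

Definition r_restr {X} (f g : prel X) : prel X :=
  fun x y => g x y /\ ~ defined f x.
Definition r_comp {X} (f g : prel X) : prel X :=
  fun x y => exists z, f x z /\ g z y.
Definition r_meet {X} (f g : prel X) : prel X :=
  fun x y => f x y /\ g x y.
Definition r_upd {X} (f g : prel X) : prel X :=
  fun x y => (f x y /\ ~ defined g x) \/ (defined f x /\ g x y).
Definition r_pref {X} (f g : prel X) : prel X :=
  fun x y => f x y \/ (~ defined f x /\ g x y).
Definition r_dom {X} (f : prel X) : prel X :=
  fun x y => x = y /\ defined f x.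
Definition r_adom {X} (f : prel X) : prel X :=
  fun x y => x = y /\ ~ defined f x.

Definition is_rep (sig : signature) (A : alg) (X : Type) (theta : A -> prel X) : Prop :=
  (forall a, functional (theta a)) /\
  (forall a b, releq (theta a) (theta b) -> a = b) /\
  (sig OpRestr -> forall a b, releq (theta (a_restr A a b)) (r_restr (theta a) (theta b))) /\
  (sig OpComp  -> forall a b, releq (theta (a_comp A a b))  (r_comp (theta a) (theta b))) /\
  (sig OpMeet  -> forall a b, releq (theta (a_meet A a b))  (r_meet (theta a) (theta b))) /\
  (sig OpUpd   -> forall a b, releq (theta (a_upd A a b))   (r_upd (theta a) (theta b))) /\
  (sig OpPref  -> forall a b, releq (theta (a_pref A a b))  (r_pref (theta a) (theta b))) /\
  (sig OpDom   -> forall a, releq (theta (a_dom A a)) (r_dom (theta a))) /\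
  (sig OpAdom  -> forall a, releq (theta (a_adom A a)) (r_adom (theta a))).

Definition a_lhd (A : alg) (a b : A) : A := a_restr A (a_restr A a b) b.
Definition leA (A : alg) (a b : A) : Prop := a_lhd A a b = a.

Definition is_join (A : alg) (S : A -> Prop) (j : A) : Prop :=
  (forall s, S s -> leA A s j) /\
  (forall u, (forall s, S s -> leA A s u) -> leA A j u).

Definition is_meet (A : alg) (S : A -> Prop) (m : A) : Prop :=
  (forall s, S s -> leA A m s) /\
  (forall l, (forall s, S s -> leA A l s) -> leA A l m).

Definition join_complete (A : alg) (X : Type) (theta : A -> prel X) : Prop :=
  forall (S : A -> Prop) (j : A), is_join A S j ->
    releq (theta j) (fun x y => exists s, S s /\ theta s x y).

Definition meet_complete (A : alg) (X : Type) (theta : A -> prel X) : Prop :=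
  forall (S : A -> Prop) (m : A), (exists s, S s) -> is_meet A S m ->
    releq (theta m) (fun x y => forall s, S s -> theta s x y).

(* Main.v *)
Require Import Defs.
From Stdlib Require Import Classical Setoid.

Lemma le_iff (A : alg) (X : Type) (theta : A -> prel X) :
  (forall a, functional (theta a)) ->
  (forall a b, releq (theta a) (theta b) -> a = b) ->
  (forall a b, releq (theta (a_restr A a b)) (r_restr (theta a) (theta b))) ->
  forall a b, leA A a b <-> (forall x y, theta a x y -> theta b x y).
Proof.
  intros Hfun Hinj Hr a b. unfold leA, a_lhd. split.
  - intros H x y Ha. rewrite <- H in Ha.
    apply (proj1 (Hr _ _ x y)) in Ha. destruct Ha as [Hb _]. exact Hb.
  - intros Hsub. apply Hinj. intros x y.
    rewrite (Hr _ _ x y). unfold r_restr. split.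
    + intros [Hb Hnd]. destruct (classic (defined (theta a) x)) as [[w Hw]|Hn].
      * pose proof (Hsub _ _ Hw) as Hw'.
        rewrite (Hfun b x y w Hb Hw'). exact Hw.
      * exfalso; apply Hnd; exists y. apply (proj2 (Hr _ _ x y)). split; assumption.
    + intros Ha. split; [auto|]. intros [z Hz].
      apply (proj1 (Hr _ _ x z)) in Hz. destruct Hz as [_ Hz].
      apply Hz; exists y; exact Ha.
Qed.

Theorem corollary3p6 (sig : signature) (A : alg) (X : Type) (theta : A -> prel X) :
  sig OpRestr -> sig OpMeet ->
  is_rep sig A X theta ->
  join_complete A X theta -> meet_complete A X theta.
Proof.
  intros Hr0 Hm0 [Hfun [Hinj [Hr [_ [Hm _]]]]] Hjc S m [s0 Hs0] [Hlb Hglb].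
  specialize (Hr Hr0); specialize (Hm Hm0).
  pose proof (le_iff A X theta Hfun Hinj Hr) as LE.
  intros x y; split.
  - intros Hxy s Hs. apply (proj1 (LE m s) (Hlb s Hs)). exact Hxy.
  - intros HI. destruct (classic (defined (theta m) x)) as [[w Hw]|Hnd].
    + pose proof (proj1 (LE m s0) (Hlb s0 Hs0) _ _ Hw) as Hw0.
      rewrite (Hfun s0 x y w (HI s0 Hs0) Hw0). exact Hw.
    + set (c := a_restr A m s0).
      assert (Hc : theta c x y).
      { apply (proj2 (Hr _ _ x y)). split; [apply HI; exact Hs0 | exact Hnd]. }
      set (T := fun t => exists s, S s /\ t = a_restr A (a_meet A s c) c).
      assert (HJ : is_join A T c).
      { split.
        - intros t [s [Hs ->]]. apply (proj2 (LE _ _)). intros p q Hp.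
          apply (proj1 (Hr _ _ p q)) in Hp. apply Hp.
        - intros u Hu. apply (proj2 (LE _ _)). intros p q Hcpq.
          destruct (classic (defined (theta (a_meet A u c)) p)) as [[v Hv]|Hnu].
          + apply (proj1 (Hm _ _ p v)) in Hv. destruct Hv as [Hv1 Hv2].
            rewrite (Hfun c p q v Hcpq Hv2). exact Hv1.
          + exfalso.
            set (w := a_restr A (a_meet A u c) c).
            assert (Hwm : leA A w m).
            { apply Hglb. intros s Hs. apply (proj2 (LE _ _)).
              intros p' q' Hw'. apply (proj1 (Hr _ _ p' q')) in Hw'.
              destruct Hw' as [Hc' Hnd'].
              destruct (classic (theta s p' q')) as [Hsq|Hnsq]; [exact Hsq|].
              exfalso.
              assert (Hts : theta (a_restr A (a_meet A s c) c) p' q').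
              { apply (proj2 (Hr _ _ p' q')). split; [exact Hc'|].
                intros [r Hr']. apply (proj1 (Hm _ _ p' r)) in Hr'.
                destruct Hr' as [Hr1 Hr2].
                rewrite (Hfun c p' q' r Hc' Hr2) in Hnsq. exact (Hnsq Hr1). }
              assert (Hup : theta u p' q').
              { apply (proj1 (LE _ _) (Hu _ (ex_intro _ s (conj Hs eq_refl)))). exact Hts. }
              apply Hnd'. exists q'. apply (proj2 (Hm _ _ p' q')). split; assumption. }
            assert (Hwp : theta w p q).
            { apply (proj2 (Hr _ _ p q)). split; assumption. }
            pose proof (proj1 (LE _ _) Hwm _ _ Hwp) as Hmp.
            apply (proj1 (Hr _ _ p q)) in Hcpq. destruct Hcpq as [_ Hndm].
            apply Hndm. exists q. exact Hmp. }
      destruct (proj1 (Hjc T c HJ x y) Hc) as [t [[s [Hs ->]] Ht]].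
      exfalso. apply (proj1 (Hr _ _ x y)) in Ht. destruct Ht as [_ Hn].
      apply Hn. exists y. apply (proj2 (Hm _ _ x y)). split; [apply HI; exact Hs | exact Hc].
Qed.
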